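(* Let $T$ be a tree with a vertex of degree $d$. For any $s\ge 1$, any straight-line drawing of $T$ with spanning ratio at most $s$ has edge-length ratio in $2^{\Omega(d/s^2)}$.
   Context: A straight-line drawing maps vertices to distinct points and edges to straight-line segments. In a straight-line drawing $\Gamma$, $\pi_\Gamma(u,v)$ is the minimum total Euclidean length of a path between $u$ and $v$, $\|uv\|_\Gamma$ is their Euclidean distance, and the spanning ratio is $\max_{u\neq v}\pi_\Gamma(u,v)/\|uv\|_\Gamma$. The edge-length ratio is the ratio between the lengths of the longest and shortest edges. The $\Omega$ notation hides an absolute constant (independent of $T$, $d$, $s$). *)

(* Defs.v *)
From HB Require Import structures.
From mathcomp Require Import all_boot all_order all_algebra.
From mathcomp Require Import reals exp.
Set Implicit Arguments. Unset Strict Implicit. Unset Printing Implicit Defensive.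
Import Order.TTheory GRing.Theory Num.Theory.
Local Open Scope ring_scope.

Section Drawings.
Variable R : realType.
Variable V : finType.

Definition simple_graph (e : rel V) : Prop :=
  symmetric e /\ irreflexive e.

Definition is_tree (e : rel V) : Prop :=
  [/\ simple_graph e,
      (forall u v : V, connect e u v) &
      (forall p : seq V, uniq p -> (3 <= size p)%N -> ~~ cycle e p)].

Definition degree (e : rel V) (v : V) : nat := #|[set u | e v u]|.

Definition point := (R * R)%type.
Definition dist (p q : point) : R :=
  Num.sqrt ((p.1 - q.1) ^+ 2 + (p.2 - q.2) ^+ 2).

Definition straight_line_drawing (P : V -> point) : Prop := injective P.

Fixpoint walk_len (P : V -> point) (x : V) (p : seq V) : R :=
  match p with
  | [::] => 0
  | y :: q => dist (P x) (P y) + walk_len P y q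
  end.

(* Spanning ratio of the drawing is at most s:
   for all u <> v, pi(u,v) <= s * ||uv||, where pi(u,v) is the minimum
   length of a u-v path in the graph (the minimum is attained, so this
   says some u-v path has length <= s * ||uv||). *)
Definition spanning_ratio_le (e : rel V) (P : V -> point) (s : R) : Prop :=
  forall u v : V, u != v ->
    exists p : seq V, [/\ path e u p, last u p = v &
                          walk_len P u p <= s * dist (P u) (P v)].

Definition edge_len (P : V -> point) (x : V * V) : R := dist (P x.1) (P x.2).

Definition max_edge_len (e : rel V) (P : V -> point) : R :=
  \big[Num.max/0]_(x : V * V | e x.1 x.2) edge_len P x.

Definition min_edge_len (e : rel V) (P : V -> point) : R :=
  \big[Num.min/max_edge_len e P]_(x : V * V | e x.1 x.2) edge_len P x.

Definition edge_length_ratio (e : rel V) (P : V -> point) : R :=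
  max_edge_len e P / min_edge_len e P.

End Drawings.

(* Main.v *)
Require Import Defs.
From HB Require Import structures.
From mathcomp Require Import all_boot all_order all_algebra.
From mathcomp Require Import reals exp.
From mathcomp Require Import ring lra.
Import Order.TTheory GRing.Theory Num.Theory.
Local Open Scope ring_scope.
Set Implicit Arguments. Unset Strict Implicit. Unset Printing Implicit Defensive.

Section Geo.
Variable R : realType.

Lemma dist_ge0 (p q : point R) : 0 <= dist p q.
Proof. exact: sqrtr_ge0. Qed.

Lemma dist_sqr (p q : point R) :
  dist p q ^+ 2 = (p.1 - q.1) ^+ 2 + (p.2 - q.2) ^+ 2.
Proof. by rewrite /dist sqr_sqrtr // addr_ge0 // sqr_ge0. Qed.

Lemma distC (p q : point R) : dist p q = dist q p.
Proof. by rewrite /dist -(sqrrN (p.1 - q.1)) -(sqrrN (p.2 - q.2)) !opprB. Qed.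

Lemma dist_gt0 (p q : point R) : p != q -> 0 < dist p q.
Proof.
case: p q => [p1 p2] [q1 q2] /= pq; rewrite /dist sqrtr_gt0 /=.
have h1 := sqr_ge0 (p1 - q1); have h2 := sqr_ge0 (p2 - q2).
rewrite lt_neqAle addr_ge0 // andbT eq_sym paddr_eq0 // !sqrf_eq0 !subr_eq0.
apply/negP => /andP[/eqP a /eqP b].
by move: pq; rewrite a b eqxx.
Qed.

Lemma coord1_le (p q : point R) : `|p.1 - q.1| <= dist p q.
Proof.
rewrite -sqrtr_sqr /dist ler_wsqrtr // lerDl sqr_ge0 //.
Qed.

Lemma coord2_le (p q : point R) : `|p.2 - q.2| <= dist p q.
Proof.
rewrite -sqrtr_sqr /dist ler_wsqrtr // lerDr sqr_ge0 //.
Qed.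

Lemma minkowski (x1 y1 x2 y2 : R) :
  Num.sqrt ((x1 + x2) ^+ 2 + (y1 + y2) ^+ 2) <=
  Num.sqrt (x1 ^+ 2 + y1 ^+ 2) + Num.sqrt (x2 ^+ 2 + y2 ^+ 2).
Proof.
set A := x1 ^+ 2 + y1 ^+ 2; set B := x2 ^+ 2 + y2 ^+ 2.
have A0 : 0 <= A by rewrite addr_ge0 // sqr_ge0.
have B0 : 0 <= B by rewrite addr_ge0 // sqr_ge0.
set a := Num.sqrt A; set b := Num.sqrt B.
have a0 : 0 <= a := sqrtr_ge0 _. have b0 : 0 <= b := sqrtr_ge0 _.
have aa : a ^+ 2 = A by rewrite sqr_sqrtr.
have bb : b ^+ 2 = B by rewrite sqr_sqrtr.
have ab0 : 0 <= a + b by rewrite addr_ge0.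
rewrite -(ger0_norm ab0) -sqrtr_sqr ler_wsqrtr //.
have cs : (x1 * x2 + y1 * y2) ^+ 2 <= (a * b) ^+ 2.
  rewrite exprMn aa bb /A /B.
  have := sqr_ge0 (x1 * y2 - x2 * y1). nra.
have cs2 : x1 * x2 + y1 * y2 <= a * b.
  have : `|x1 * x2 + y1 * y2| <= a * b.
    by rewrite -(ger0_norm (mulr_ge0 a0 b0)) -ler_sqr ?normr_ge0 // !real_normK ?num_real //.
  move=> h; exact: le_trans (ler_norm _) h.
rewrite /A /B in aa bb. nra.
Qed.

Lemma dist_tri (p q r : point R) : dist p r <= dist p q + dist q r.
Proof.
rewrite /dist.
have -> : p.1 - r.1 = (p.1 - q.1) + (q.1 - r.1) by rewrite addrA subrK.
have -> : p.2 - r.2 = (p.2 - q.2) + (q.2 - r.2) by rewrite addrA subrK.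
exact: minkowski.
Qed.

End Geo.

Section Graph.
Variable R : realType.
Variable V : finType.

Lemma walk_ge (P : V -> point R) (x : V) (p : seq V) :
  dist (P x) (P (last x p)) <= walk_len P x p.
Proof.
elim: p x => [|y q IH] x /=.
  by rewrite /dist !subrr expr0n /= addr0 sqrtr0.
have := dist_tri (P x) (P y) (P (last y q)); have := IH y; lra.
Qed.

Lemma walk_mem (P : V -> point R) (x v : V) (p : seq V) : v \in p ->
  dist (P x) (P v) + dist (P v) (P (last x p)) <= walk_len P x p.
Proof.
elim: p x => [//|y q IH] x /=; rewrite in_cons => /orP[/eqP ->|vq].
  by rewrite lerD2l walk_ge.
have := IH y vq.
have := dist_tri (P x) (P y) (P v).
lra.
Qed.

Lemma tree_sep (e : rel V) (v u1 u2 : V) (p : seq V) : is_tree e ->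
  e v u1 -> e v u2 -> u1 != u2 -> path e u1 p -> last u1 p = u2 -> v \in p.
Proof.
case=> [[esym eirr] _ nocyc] vu1 vu2 u12 pp lp.
apply/negPn/negP => vnp.
have [p' [pp' up' sub lp']] : exists p', [/\ path e u1 p', uniq (u1 :: p'),
    {subset p' <= p} & last u1 p' = u2].
  by rewrite -lp; case: (shortenP pp) => p' *; exists p'.
have vu1' : v != u1 by apply/negP => /eqP h; move: vu1; rewrite h eirr.
have vnp' : v \notin p' by apply/negP => /sub; apply/negP.
have p'n : p' != [::] by case: p' lp' {pp' up' sub vnp'} => //= h; rewrite h eqxx in u12.
apply: (negP (nocyc (v :: u1 :: p') _ _)).
- by rewrite /= in_cons negb_or vu1' vnp' /=; move: up' => /= ->.
- by case: p' p'n {pp' up' sub vnp' lp'}.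
- rewrite /= rcons_path vu1 pp' /= lp' esym //.
Qed.

End Graph.

Section Big.
Variable R : realType.

Lemma my_bigmax_ge (I : finType) (Pr : pred I) (F : I -> R) x0 i0 : Pr i0 ->
  F i0 <= \big[Num.max/x0]_(i | Pr i) F i.
Proof.
move=> Pi0; rewrite -big_filter.
have : i0 \in filter Pr (index_enum I) by rewrite mem_filter Pi0 mem_index_enum.
elim: (filter _ _) => [//|a l IH]; rewrite in_cons big_cons => /orP[/eqP->|/IH h].
  by rewrite le_max lexx.
by rewrite le_max h orbT.
Qed.

Lemma my_bigmin_le (I : finType) (Pr : pred I) (F : I -> R) x0 i0 : Pr i0 ->
  \big[Num.min/x0]_(i | Pr i) F i <= F i0.
Proof.
move=> Pi0; rewrite -big_filter.
have : i0 \in filter Pr (index_enum I) by rewrite mem_filter Pi0 mem_index_enum.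
elim: (filter _ _) => [//|a l IH]; rewrite in_cons big_cons => /orP[/eqP->|/IH h].
  by rewrite ge_min lexx.
by rewrite ge_min h orbT.
Qed.

Lemma my_bigmin_gt0 (I : finType) (Pr : pred I) (F : I -> R) x0 : 0 < x0 ->
  (forall i, Pr i -> 0 < F i) -> 0 < \big[Num.min/x0]_(i | Pr i) F i.
Proof.
move=> x00 FP; apply: (big_ind (fun x => 0 < x)) => //.
by move=> x y x0' y0; rewrite lt_min x0' y0.
Qed.

Variable V : finType.

Lemma sep (e : rel V) (P : V -> point R) (s : R) (v u1 u2 : V) :
  is_tree e -> spanning_ratio_le e P s -> e v u1 -> e v u2 -> u1 != u2 ->
  dist (P v) (P u1) + dist (P v) (P u2) <= s * dist (P u1) (P u2).
Proof.
move=> tr sp vu1 vu2 u12.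
case: (sp u1 u2 u12) => p [pp lp wl].
have vp := tree_sep tr vu1 vu2 u12 pp lp.
have := walk_mem P u1 vp; rewrite lp (distC (P u1)); lra.
Qed.

End Big.

Lemma sq_lt1 (R : realType) (z : R) : `|z| < 1 -> z ^+ 2 < 1.
Proof.
move=> h; rewrite -real_normK ?num_real //.
have := normr_ge0 z; nra.
Qed.

Lemma trunc_close (R : realType) (a b : R) : 0 <= a -> 0 <= b ->
  Num.truncn a = Num.truncn b -> `|a - b| < 1.
Proof.
move=> a0 b0 eab; have := truncn_itv a0; have := truncn_itv b0.
rewrite eab -addn1 natrD => /andP[h1 h2] /andP[h3 h4].
rewrite ltr_norml; apply/andP; split; lra.
Qed.

Unset Implicit Arguments.
Theorem theorem8 (R : realType) :
  exists c : R, 0 < c /\ exists K : R,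
  forall (V : finType) (e : rel V), is_tree e ->
  forall (v : V) (d : nat), degree e v = d ->
  forall s : R, 1 <= s ->
  forall P : V -> point R, straight_line_drawing P ->
  spanning_ratio_le e P s ->
  K <= d%:R / s ^+ 2 ->
  powR 2 (c * d%:R / s ^+ 2) <= edge_length_ratio e P.
Proof.
exists (1/100); split; first by rewrite divr_gt0.
exists 100.
move=> V e tr v d degd s s1 P inj sp Kd.
have s0 : 0 < s by apply: lt_le_trans s1.
have ss0 : 0 < s ^+ 2 by rewrite exprn_gt0.
have [[esym eirr] _ _] := tr.
set N := [set u | e v u].
have cardN : #|N| = d by rewrite -degd.
set r := fun u => dist (P v) (P u).
set M := max_edge_len e P; set m := min_edge_len e P.
have epos : forall x : V * V, e x.1 x.2 -> 0 < edge_len P x.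
  move=> [x y] /= exy; apply: dist_gt0; rewrite (inj_eq inj) /=.
  by apply/negP => /eqP h; move: exy; rewrite /= h eirr.
have rpos : forall u, e v u -> 0 < r u by move=> u h; exact: (epos (v, u)).
have rM : forall u, e v u -> r u <= M.
  by move=> u h; exact: (my_bigmax_ge (Pr := fun x : V * V => e x.1 x.2) (edge_len P) 0 (i0 := (v, u))).
have d0 : (0 < d)%N.
  case: d Kd {degd cardN} => //; rewrite mul0r; lra.
have [u0 u0N] : exists u0, u0 \in N by apply/card_gt0P; rewrite cardN.
have evu0 : e v u0 by move: u0N; rewrite inE.
have M0 : 0 < M := lt_le_trans (rpos u0 evu0) (rM u0 evu0).
have m0 : 0 < m by apply: my_bigmin_gt0.
have rm : forall u, e v u -> m <= r u.
  by move=> u h; exact: (my_bigmin_le (Pr := fun x : V * V => e x.1 x.2) (edge_len P) M (i0 := (v, u))).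
have Mm : 1 <= M / m by rewrite ler_pdivlMr // mul1r; apply: le_trans (rm _ evu0) (rM _ evu0).
set n0 := trunc_log 2 (Num.truncn (M / m)).
have n0M : 2 ^+ n0 <= M / m.
  have := trunc_logP (p := 2) (n := Num.truncn (M / m)) isT.
  rewrite truncn_gt0 Mm => /(_ isT); rewrite -/n0 -(ler_nat R) natrX => h.
  apply: le_trans h _; rewrite truncn_le; lra.
set q := fun u => Num.truncn (r u / m).
set j := fun u => trunc_log 2 (q u).
have rm1 : forall u, e v u -> 1 <= r u / m.
  by move=> u h; rewrite ler_pdivlMr // mul1r rm.
have jb : forall u, e v u -> 2 ^+ j u * m <= r u < 2 ^+ (j u).+1 * m.
  move=> u h.
  have qp : (0 < q u)%N by rewrite truncn_gt0 rm1.
  have /andP[b1 b2] := trunc_log_bounds (p := 2) isT qp.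
  have /andP[t1 t2] := truncn_itv (le_trans ler01 (rm1 u h)).
  move: b1 b2; rewrite -(ler_nat R) -(ltr_nat R) !natrX -/(j u) => b1 b2.
  rewrite -ler_pdivlMr // -ltr_pdivrMr //; apply/andP; split.
    exact: le_trans b1 t1.
  apply: lt_le_trans t2 _; rewrite -/(q u).
  by rewrite -natrX ler_nat -(ltr_nat R) natrX.
have jn0 : forall u, e v u -> (j u <= n0)%N.
  move=> u h; apply: leq_trunc_log; apply: le_truncn.
  by rewrite ler_pM2r ?invr_gt0 // rM.
set N0 := (Num.truncn (2 * s)).+1.
have N0b : 2 * s < N0%:R <= 2 * s + 1.
  rewrite /N0 truncnS_gt /= -addn1 natrD lerD2r truncn_le; lra.
set G := (N0 + N0)%N.
set kap := fun u => s / (2 ^+ j u * m).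
have rho0 : forall u, 0 < 2 ^+ j u * m by move=> u; rewrite mulr_gt0 // exprn_gt0.
have kap0 : forall u, 0 < kap u by move=> u; rewrite divr_gt0.
have rk : forall u, 2 ^+ j u * m * kap u = s.
  by move=> u; rewrite /kap mulrC divfK // gt_eqF.
set cx := fun u => Num.truncn (((P u).1 - (P v).1) * kap u + N0%:R).
set cy := fun u => Num.truncn (((P u).2 - (P v).2) * kap u + N0%:R).
have abnd : forall u (x : R), e v u -> `|x| <= r u ->
    0 <= x * kap u + N0%:R < G%:R.
  move=> u x h xr.
  have /andP[_ h2] := jb u h.
  have h3 : `|x| * kap u < 2 * s.
    rewrite -(rk u) mulrA ltr_pM2r //; apply: le_lt_trans xr _.
    by move: h2; rewrite exprS mulrAC; lra.
  rewrite -{1}(gtr0_norm (kap0 u)) -normrM ltr_norml in h3.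
  case/andP: h3 => h4 h5.
  rewrite /G natrD; apply/andP; split; lra.
have cxb : forall u, e v u -> (cx u <= G)%N.
  move=> u h; have xr : `|(P u).1 - (P v).1| <= r u by rewrite /r distC coord1_le.
  have /andP[_ h2] := abnd u _ h xr.
  rewrite truncn_le_nat; apply: lt_le_trans h2 _; rewrite ler_nat; exact: leqnSn.
have cyb : forall u, e v u -> (cy u <= G)%N.
  move=> u h; have xr : `|(P u).2 - (P v).2| <= r u by rewrite /r distC coord2_le.
  have /andP[_ h2] := abnd u _ h xr.
  rewrite truncn_le_nat; apply: lt_le_trans h2 _; rewrite ler_nat; exact: leqnSn.
pose f := fun u => ((inord (j u) : 'I_n0.+1),
                     ((inord (cx u) : 'I_G.+1), (inord (cy u) : 'I_G.+1))).
have finj : {in N &, injective f}.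
  move=> u1 u2; rewrite !inE => h1 h2 [].
  move=> /(congr1 val); rewrite /= !inordK ?ltnS ?jn0 // => ej.
  move=> /(congr1 val); rewrite /= !inordK ?ltnS ?cxb // => ex.
  move=> /(congr1 val); rewrite /= !inordK ?ltnS ?cyb // => ey.
  apply/eqP; apply: contraT => u12.
  have hs := sep tr sp h1 h2 u12.
  have ek : kap u2 = kap u1 by rewrite /kap -ej.
  have /andP[j1 _] := jb u1 h1.
  have /andP[j2 _] := jb u2 h2.
  rewrite -ej in j2.
  have rk1 := rk u1. have k1 := kap0 u1. have rh := rho0 u1.
  set rho := 2 ^+ j u1 * m in j1 j2 rk1 rh.
  set k := kap u1 in ek k1 rk1.
  set D := dist (P u1) (P u2) in hs.
  have D0 : 0 <= D := dist_ge0 _ _.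
  have DD := dist_sqr (P u1) (P u2); rewrite -/D in DD.
  have xr1 : `|(P u1).1 - (P v).1| <= r u1 by rewrite /r distC coord1_le.
  have xr2 : `|(P u2).1 - (P v).1| <= r u2 by rewrite /r distC coord1_le.
  have yr1 : `|(P u1).2 - (P v).2| <= r u1 by rewrite /r distC coord2_le.
  have yr2 : `|(P u2).2 - (P v).2| <= r u2 by rewrite /r distC coord2_le.
  have /andP[a1 _] := abnd u1 _ h1 xr1.
  have /andP[a2 _] := abnd u2 _ h2 xr2.
  have /andP[b1 _] := abnd u1 _ h1 yr1.
  have /andP[b2 _] := abnd u2 _ h2 yr2.
  have cx1 := trunc_close a1 a2 ex.
  have cy1 := trunc_close b1 b2 ey.
  rewrite ek -/k in cx1 cy1 a2 b2.
  have eX : ((P u1).1 - (P v).1) * k + N0%:R - (((P u2).1 - (P v).1) * k + N0%:R)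
     = ((P u1).1 - (P u2).1) * k by ring.
  have eY : ((P u1).2 - (P v).2) * k + N0%:R - (((P u2).2 - (P v).2) * k + N0%:R)
     = ((P u1).2 - (P u2).2) * k by ring.
  rewrite eX in cx1; rewrite eY in cy1.
  have sx := sq_lt1 cx1; have sy := sq_lt1 cy1.
  rewrite [_ ^+ 2]exprMn in sx; rewrite [_ ^+ 2]exprMn in sy.
  have h3 : 2 * rho <= s * D by move: j1 j2 hs; rewrite /r /=; lra.
  have h4 : 2 * s <= s * (D * k).
    have := ler_wpM2r (ltW k1) h3; rewrite -rk1; nra.
  have h5 : 2 <= D * k by rewrite -(ler_pM2l s0) mulrC.
  have h6 : (4 : R) <= (D * k) ^+ 2 by nra.
  rewrite exprMn DD in h6.
  have : (4 : R) < 2 by lra.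
  by rewrite ltr_nat.
have := @leq_card_in _ _ f N finj; rewrite !card_prod !card_ord cardN => dle.
have Gb : (G.+1)%:R <= 7 * s.
  rewrite -addn1 natrD /G natrD; lra.
have G2 : (G.+1 * G.+1)%:R <= 49 * s ^+ 2.
  rewrite natrM; have := ler0n R G.+1; nra.
have dle' : d%:R <= (n0.+1)%:R * (49 * s ^+ 2).
  have h : (d%:R : R) <= (n0.+1 * (G.+1 * G.+1))%:R.
    by rewrite ler_nat.
  apply: le_trans h _.
  by rewrite natrM ler_pM2l ?ltr0n.
have tb : d%:R / s ^+ 2 <= (n0.+1)%:R * 49.
  by rewrite ler_pdivrMr // -mulrA.
have n00 := ler0n R n0.
have tn : 1 / 100 * d%:R / s ^+ 2 <= n0%:R.
  rewrite -mulrA; move: tb Kd; rewrite -natr1; lra.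
rewrite /edge_length_ratio -/M -/m.
apply: le_trans n0M; rewrite -[2 ^+ n0]powR_mulrn //; apply: (ler_powR (a := 2)) => //; lra.
Qed.
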